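(* Let $K$ be a field, let $P$ be a convex $n$-gon and let $D$ be a dissection of $P$ which divides $P$ into subpolygons $P_1,\ldots,P_\ell$ with $P_i$ a $d_i$-gon ($d_i\ge 3$). Let $f:\mathrm{diag}(P)\to K$ be the weak frieze with respect to $D$ whose restriction to $\mathrm{diag}(P_i)$ is the constant map with value $1$ for every $i$. Let $M_f$ be the associated weak frieze matrix. Then $$\det(M_f) = (-1)^{\ell-1}\prod_{i=1}^{\ell}(-1)^{d_i-1}(d_i-1) = (-1)^{n-1}\prod_{i=1}^{\ell}(d_i-1).$$
   Context: For a convex polygon with vertices $1,\ldots,n$ (cyclically ordered), a diagonal is any unordered pair $\{i,j\}$ of distinct vertices (including boundary edges); $\mathrm{diag}(P)$ is the set of all diagonals. A diagonal is internal if its endpoints are not cyclic neighbours. Diagonals $\{i,j\}$, $\{k,\ell\}$ cross if cyclically $i<k<j<\ell$ or $i<\ell<j<k$. A dissection is a set of pairwise non-crossing internal diagonals. A map $f:\mathrm{diag}(P)\to K$ (write $f(i,j)=f(\{i,j\})$) is a weak frieze with respect to a dissection $D$ if for every pair of crossing diagonals $\{i,j\},\{k,\ell\}$ with at least one in $D$, $f(i,j)f(k,\ell)=f(i,k)f(j,\ell)+f(i,\ell)f(j,k)$. Given subpolygons cut out by $D$ and weak friezes on them agreeing (with nonzero value) on shared diagonals, there is a unique weak frieze on $P$ with respect to $D$ restricting to them; here this is applied with all pieces constantly $1$. The weak frieze matrix $M_f$ is the symmetric $n\times n$ matrix with entries $m_{i,i}=0$ and $m_{i,j}=f(i,j)$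 for $i\neq j$. *)

(* Defs.v *)
(* Vertices of the convex n-gon are 'I_n, cyclically ordered
   0,1,...,n-1. A diagonal {i,j} is represented by the finite set [set i; j]. *)
From HB Require Import structures.
From mathcomp Require Import all_boot all_order all_algebra.
Set Implicit Arguments. Unset Strict Implicit. Unset Printing Implicit Defensive.
Import Order.TTheory GRing.Theory Num.Theory.

Local Open Scope ring_scope.
Section Polygon.
Variable n : nat.

Definition strictly_between (a b x : 'I_n) : bool :=
  ((minn a b < x) && (x < maxn a b))%N.

(* {i,j} and {k,l} cross: four distinct vertices, exactly one of k,l lies on
   each of the two arcs cut out by i and j (i.e. cyclically i<k<j<l or i<l<j<k). *)
Definition cross (i j k l : 'I_n) : bool :=
  [&& k != i, k != j, l != i, l != j &
      strictly_between i j k != strictly_between i j l].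

Definition internal (i j : 'I_n) : bool :=
  [&& i != j, (i.+1 %% n != j)%N & (j.+1 %% n != i)%N].

Definition dissection (D : {set {set 'I_n}}) : Prop :=
  (forall d, d \in D -> exists i j : 'I_n, d = [set i; j] /\ internal i j) /\
  (forall i j k l : 'I_n, [set i; j] \in D -> [set k; l] \in D -> ~~ cross i j k l).

Definition crossed_by (D : {set {set 'I_n}}) (x y : 'I_n) : bool :=
  [exists k, exists l, ([set k; l] \in D) && cross x y k l].

Definition uncrossed (D : {set {set 'I_n}}) (S : {set 'I_n}) : bool :=
  [forall x in S, forall y in S, ~~ crossed_by D x y].

(* The subpolygons P_1,...,P_l cut out by D, given by their vertex sets:
   the maximal vertex sets in which no diagonal is crossed by D. *)
Definition cells (D : {set {set 'I_n}}) : {set {set 'I_n}} :=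
  [set S | maxset (uncrossed D) S].

Definition weak_frieze (K : fieldType) (D : {set {set 'I_n}})
    (f : {set 'I_n} -> K) : Prop :=
  forall i j k l : 'I_n, cross i j k l ->
    ([set i; j] \in D) || ([set k; l] \in D) ->
    f [set i; j] * f [set k; l] =
      f [set i; k] * f [set j; l] + f [set i; l] * f [set j; k].

Definition frieze_matrix (K : fieldType) (f : {set 'I_n} -> K) : 'M[K]_n :=
  \matrix_(i < n, j < n) (if i == j then 0 else f [set i; j]).

End Polygon.

(* Main.v *)
Require Import Defs.
From HB Require Import structures.
From mathcomp Require Import all_boot all_order all_algebra.
From mathcomp Require Import all_fingroup zify ring.
Import Order.TTheory GRing.Theory Num.Theory.

Set Implicit Arguments. Unset Strict Implicit.

Definition sb (a b x : nat) : Prop := (minn a b < x /\ x < maxn a b)%N.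
Definition crossN (x y k l : nat) : Prop := k <> x /\ k <> y /\ l <> x /\ l <> y /\ (sb x y k -> ~ sb x y l) /\ (~ sb x y l -> sb x y k).

Lemma crossE n (x y k l : 'I_n) : cross x y k l <-> crossN x y k l.
Proof.
rewrite /cross /crossN /sb /strictly_between -!(inj_eq val_inj) /=.
have [E1|E1] := boolP (minn x y < k < maxn x y)%N;
have [E2|E2] := boolP (minn x y < l < maxn x y)%N;
 rewrite ?E1 ?E2 ?(negbTE E1) ?(negbTE E2) /= ?andbF ?andbT; split; try done;
 try (move/and4P => [h1 h2 h3 h4]); try (move=> h; apply/and4P; split); lia.
Qed.

Lemma crossN_12 x y k l : crossN x y k l -> crossN y x k l.
Proof. rewrite /crossN /sb; lia. Qed.
Lemma crossN_34 x y k l : crossN x y k l -> crossN x y l k.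
Proof. rewrite /crossN /sb; lia. Qed.
Lemma crossN_sw x y k l : crossN x y k l -> crossN k l x y.
Proof. rewrite /crossN /sb; lia. Qed.
Lemma crossN_refl x k l : ~ crossN x x k l.
Proof. rewrite /crossN /sb; lia. Qed.
Lemma crossN_in_out a b x y : sb a b x -> (y < minn a b \/ maxn a b < y)%N -> crossN x y a b.
Proof. rewrite /crossN /sb; lia. Qed.
Lemma crossN_split a b x y : crossN a b x y ->
  (sb a b x /\ (y < minn a b \/ maxn a b < y)%N) \/ (sb a b y /\ (x < minn a b \/ maxn a b < x)%N).
Proof. rewrite /crossN /sb; lia. Qed.
Lemma closedA_N a b x y k l : (minn a b <= x <= maxn a b)%N -> (minn a b <= y <= maxn a b)%N ->
  crossN x y k l -> ~ crossN a b k l -> (minn a b <= k <= maxn a b)%N.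
Proof. rewrite /crossN /sb; lia. Qed.
Lemma closedB_N a b x y k l : ~ sb a b x -> ~ sb a b y ->
  crossN x y k l -> ~ crossN a b k l -> ~ sb a b k.
Proof. rewrite /crossN /sb; lia. Qed.
Lemma crossN_neq x y k l : crossN x y k l -> k <> l.
Proof. rewrite /crossN /sb; lia. Qed.

Definition insd (a b z : nat) := (minn a b < z < maxn a b)%N.
Definition outsd (a b z : nat) := (z < minn a b)%N || (maxn a b < z)%N.

Lemma L_na a b : ~~ insd a b a /\ ~~ outsd a b a.
Proof. rewrite /insd /outsd; split; lia. Qed.
Lemma L_nb a b : ~~ insd a b b /\ ~~ outsd a b b.
Proof. rewrite /insd /outsd; split; lia. Qed.
Lemma L_io a b z : insd a b z -> ~~ outsd a b z.
Proof. rewrite /insd /outsd; lia. Qed.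
Lemma L_split a b x y : crossN a b x y ->
  (insd a b x /\ outsd a b y) \/ (insd a b y /\ outsd a b x).
Proof. rewrite /crossN /insd /outsd /sb; lia. Qed.
Lemma L_clA a b u v k l : ~~ outsd a b u -> ~~ outsd a b v -> crossN u v k l -> ~ crossN a b k l -> ~~ outsd a b k.
Proof. move=> h1 h2 h3 h4; have := @closedA_N a b u v k l _ _ h3 h4; move: h1 h2; rewrite /outsd; lia. Qed.
Lemma L_clB a b u v k l : ~~ insd a b u -> ~~ insd a b v -> crossN u v k l -> ~ crossN a b k l -> ~~ insd a b k.
Proof. move=> h1 h2 h3 h4; have := @closedB_N a b u v k l _ _ h3 h4; move: h1 h2; rewrite /insd /sb; lia. Qed.
Lemma L_inout a b x y : insd a b x -> outsd a b y -> crossN x y a b.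
Proof. move=> h1 h2; apply: crossN_in_out; move: h1 h2; rewrite /insd /outsd /sb; lia. Qed.
Lemma L_mid a b w : ~~ outsd a b w -> ~~ insd a b w -> w = a \/ w = b.
Proof. rewrite /insd /outsd; lia. Qed.
Lemma L_lt p q : (0 < q)%N -> (p.+2 < p.+2 + q)%N.
Proof. lia. Qed.
Lemma L_lt' p q : (0 < p)%N -> (q.+2 < p.+2 + q)%N.
Proof. lia. Qed.
Lemma L_3 p : (0 < p)%N -> (3 <= p.+2)%N.
Proof. lia. Qed.
Lemma L_32 m : (3 <= m)%N -> (m <= 2)%N -> False.
Proof. lia. Qed.
Lemma L_e1 p q : (p.+2 + q - 1 = (p + q).+1)%N.
Proof. lia. Qed.
Lemma L_e2 p : (p.+2 - 1 = p.+1)%N.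
Proof. lia. Qed.
Lemma L_e3 p q : (p.+2 - 2 + (q.+2 - 2) = p.+2 + q - 2)%N.
Proof. lia. Qed.
Lemma L_e4 m : (3 <= m)%N -> (m - 1 = m - 2 + 1)%N.
Proof. lia. Qed.
Lemma L_e5 l n : (0 < l)%N -> (3 <= n)%N -> (l - 1 + (n - 2 + l) = (n - 1) + 2 * (l - 1))%N.
Proof. lia. Qed.
Lemma L_e6 n : (3 <= n)%N -> (0 = n - 2)%N -> False.
Proof. lia. Qed.

Unset Implicit Arguments.
Local Open Scope ring_scope.

Section Mat.
Variables (K : fieldType).

Lemma det_schur k q (P : 'M[K]_k) (Z : 'M[K]_(k,q)) (Q : 'M[K]_q) :
  \det (block_mx P (P *m Z) (Z^T *m P) Q) = \det P * \det (Q - Z^T *m P *m Z).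
Proof.
have -> : block_mx P (P *m Z) (Z^T *m P) Q =
   block_mx 1%:M 0 (Z^T) 1%:M *m block_mx P (P *m Z) 0 (Q - Z^T *m P *m Z).
  by rewrite mulmx_block !mul1mx !mul0mx !addr0 mulmxA addrC subrK.
by rewrite det_mulmx det_lblock det_ublock !det1 !mul1r.
Qed.

Definition JI k : 'M[K]_k := \matrix_(i, j) (if i == j then 0 else 1).

Lemma det_JI q : \det (JI q.+1) = (-1) ^+ q * q%:R.
Proof.
have E : JI (1 + q) = block_mx (0 : 'M_1) (const_mx 1) (const_mx 1) (JI q).
  apply/matrixP => i j.
  rewrite -[i]splitK -[j]splitK; case: (split i) => i'; case: (split j) => j'; rewrite /=
     ?block_mxEul ?block_mxEur ?block_mxEdl ?block_mxEdr !mxE.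
  - by rewrite !ord1 eqxx.
  - by rewrite -val_eqE /= ord1.
  - by rewrite -val_eqE /= ord1.
  - by rewrite -val_eqE /= eqSS val_eqE.
pose u : 'M[K]_(1, q) := const_mx 1.
pose v : 'M[K]_(q, 1) := const_mx 1.
have dL1 : \det (block_mx 1%:M 0 (- v) 1%:M : 'M[K]_(1 + q)) = 1 by rewrite det_lblock !det1 mulr1.
have dL2 : \det (block_mx 1%:M 0 v 1%:M : 'M[K]_(1 + q)) = 1 by rewrite det_lblock !det1 mulr1.
have vu : v *m u = const_mx 1.
  by apply/matrixP => i j; rewrite !mxE big_ord1 !mxE mulr1.
have Q1 : - const_mx 1 + JI q = - 1%:M.
  apply/matrixP => i j; rewrite !mxE; case: (i == j) => /=; by rewrite ?addr0 ?mulr1n ?mulr0n ?oppr0 ?addNr.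
have E2 : (block_mx 1%:M 0 (- v) 1%:M : 'M[K]_(1 + q)) *m JI (1 + q) *m block_mx 1%:M 0 v 1%:M
   = block_mx (u *m v) u 0 (- 1%:M).
  rewrite E !mulmx_block !mul1mx !mul0mx !mulmx0 !addr0 !add0r.
  rewrite -/u -/v mulNmx vu Q1 !mulmx1 mulNmx mul1mx addrN.
  by rewrite add0r.
have : \det ((block_mx 1%:M 0 (- v) 1%:M : 'M[K]_(1 + q)) *m JI (1 + q) *m block_mx 1%:M 0 v 1%:M) = \det (JI (1 + q)).
  by rewrite !det_mulmx dL1 dL2 mul1r mulr1.
rewrite E2 det_ublock det_mx11 !mxE => <-.
have -> : - 1%:M = (-1) *: (1%:M : 'M[K]_q) by rewrite scaleN1r.
rewrite detZ det1 mulr1 mulrC; congr (_ * _).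
under eq_bigr do rewrite !mxE mulr1.
by rewrite sumr_const card_ord.
Qed.

End Mat.

Section Seq.
Variables (K : fieldType) (n : nat) (x0 : 'I_n) (mm : 'I_n -> 'I_n -> K).

Definition Mk k (s : seq 'I_n) : 'M[K]_k :=
  \matrix_(i < k, j < k) mm (nth x0 s i) (nth x0 s j).

Lemma det_Mk_perm k s1 s2 : uniq s1 -> uniq s2 -> s1 =i s2 ->
  size s1 = k -> size s2 = k -> \det (Mk k s1) = \det (Mk k s2).
Proof.
move=> u1 u2 e z1 z2.
have H (i : 'I_k) : (index (nth x0 s2 i) s1 < k)%N.
  suff : (index (nth x0 s2 i) s1 < size s1)%N by rewrite z1.
  by rewrite index_mem e mem_nth // z2.
pose g i := Ordinal (H i).
have gK i : nth x0 s1 (g i) = nth x0 s2 i by rewrite nth_index // e mem_nth // z2.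
have ginj : injective g.
  move=> i j /(congr1 (nth x0 s1 \o val)) /=; rewrite !gK => /eqP.
  by rewrite nth_uniq ?z2 // => /eqP /val_inj.
pose s := perm ginj.
have -> : Mk k s2 = row_perm s (col_perm s (Mk k s1)).
  by apply/matrixP => i j; rewrite /row_perm /col_perm !mxE !permE !gK.
rewrite row_permE col_permE !det_mulmx !det_perm odd_permV.
by case: (odd_perm s); rewrite /= ?expr1 ?expr0; ring.
Qed.

Lemma det_Mk_cat a b s' t :
  mm a a = 0 -> mm b b = 0 -> mm a b = 1 -> mm b a = 1 ->
  (forall x y, mm x y = mm y x) ->
  (forall x y, x \in s' -> y \in t -> mm x y = mm x a * mm b y + mm x b * mm a y) ->
  \det (Mk ((size s').+2 + size t) ((a :: b :: s') ++ t)) =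
  \det (Mk (size s').+2 (a :: b :: s')) *
  \det (Mk (size t) t - \matrix_(i < size t, j < size t)
          (mm a (nth x0 t i) * mm b (nth x0 t j) + mm b (nth x0 t i) * mm a (nth x0 t j))).
Proof.
move=> aa bb ab ba sym rel.
have rel' x y : x \in a :: b :: s' -> y \in t -> mm x y = mm x a * mm b y + mm x b * mm a y.
  rewrite !inE => /orP [/eqP ->|/orP [/eqP ->|xs]] yt.
  - by rewrite aa ab mul0r add0r mul1r.
  - by rewrite ba bb mul0r addr0 mul1r.
  - exact: rel.
have nthL (i : nat) : (i < (size s').+2)%N -> nth x0 (a :: b :: s' ++ t) i = nth x0 (a :: b :: s') i.
  by move=> h; rewrite -!cat_cons nth_cat /= h.
have nthR (j : nat) : nth x0 (s' ++ t) (size s' + j) = nth x0 t j.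
  by rewrite nth_cat ltnNge leq_addr /= addKn.
set p := size s'; set q := size t.
pose Z : 'M[K]_(p.+2, q) := \matrix_(r < p.+2, j < q)
   (if (r : nat) == 0%N then mm b (nth x0 t j) else if (r : nat) == 1%N then mm a (nth x0 t j) else 0).
set P := Mk p.+2 (a :: b :: s').
have E : Mk (p.+2 + q) ((a :: b :: s') ++ t) = block_mx P (P *m Z) (Z^T *m P) (Mk q t).
  apply/matrixP => i j.
  rewrite -[i]splitK -[j]splitK; case: (split i) => i'; case: (split j) => j'; rewrite /=
    ?block_mxEul ?block_mxEur ?block_mxEdl ?block_mxEdr !mxE /=.
  - by rewrite !nthL.
  - rewrite nthL // nthR.
    rewrite !big_ord_recl big1 ?addr0 => [|r _]; last by rewrite /Z !mxE !lift0 /= mulr0.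
    rewrite /P /Mk /Z !mxE !lift0 /= rel' ?mem_nth //.
  - rewrite nthL // nthR.
    rewrite !big_ord_recl big1 ?addr0 => [|r _]; last by rewrite /Z !mxE !lift0 /= mul0r.
    rewrite /P /Mk /Z !mxE !lift0 /= sym rel' ?mem_nth // (sym _ a) (sym _ b); ring.
  - by rewrite !nthR.
rewrite E det_schur; congr (_ * \det (_ - _)).
apply/matrixP => i j; rewrite !mxE.
rewrite !big_ord_recl big1 ?addr0 => [|r _]; last by rewrite /Z !mxE !lift0 /= mulr0.
rewrite !mxE !big_ord_recl big1 ?addr0 => [|r _]; last by rewrite /Z !mxE !lift0 /= mul0r.
rewrite big1 ?addr0; last by move=> r _; rewrite !mxE !lift0 /= mul0r.
rewrite /P /Mk /Z !mxE !lift0 /= aa bb ab ba; ring.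
Qed.

End Seq.

Set Implicit Arguments. Unset Strict Implicit.

Section Frieze.
Variables (K : fieldType) (n : nat) (D : {set {set 'I_n}}) (f : {set 'I_n} -> K) (x0 : 'I_n).
Hypothesis hD : dissection D.
Hypothesis hW : weak_frieze D f.
Hypothesis hC : forall S, S \in cells D -> forall i j : 'I_n, i \in S -> j \in S -> i != j ->
     f [set i; j] = 1.

Definition mm (x y : 'I_n) : K := if x == y then 0 else f [set x; y].

Lemma mmC x y : mm x y = mm y x.
Proof. by rewrite /mm eq_sym setUC. Qed.

Lemma mm_uncr T x y : uncrossed D T -> x \in T -> y \in T -> x != y -> mm x y = 1.
Proof.
move=> hT xT yT xy; case: (maxset_exists hT) => C hmax hsub.
rewrite /mm (negbTE xy); apply: (@hC C) => //.
- by rewrite inE.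
- exact: (subsetP hsub).
- exact: (subsetP hsub).
Qed.

Lemma noncrossD a b k l : [set a; b] \in D -> [set k; l] \in D -> ~ crossN a b k l.
Proof. by move=> h1 h2 /crossE h; move: (hD.2 a b k l h1 h2); rewrite h. Qed.

Lemma uncr_D a b : [set a; b] \in D -> uncrossed D [set a; b].
Proof.
move=> abD; apply/forallP => x; apply/implyP => xin; apply/forallP => y; apply/implyP => yin.
apply/negP => /existsP [k /existsP [l /andP [klD /crossE cr]]].
move: cr; move: xin yin; rewrite !inE => /orP [] /eqP -> /orP [] /eqP -> cr.
- exact: (crossN_refl cr).
- exact: (noncrossD abD klD cr).
- exact: (noncrossD abD klD (crossN_12 cr)).
- exact: (crossN_refl cr).
Qed.

Definition PS (S : {set 'I_n}) : pred {set 'I_n} := fun T => (T \subset S) && uncrossed D T.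
Definition cellsR S := [set T | maxset (PS S) T].
Definition closedS (S : {set 'I_n}) := forall x y k l : 'I_n, x \in S -> y \in S ->
  [set k; l] \in D -> cross x y k l -> k \in S.
Definition dS (S : {set 'I_n}) := \det (@Mk K n x0 mm #|S| (enum S)).

Lemma uncr_elim T x y k l : uncrossed D T -> x \in T -> y \in T -> [set k; l] \in D -> ~ crossN x y k l.
Proof.
move=> hT xT yT klD /crossE cr.
move/forallP: hT => /(_ x); rewrite xT /= => /forallP /(_ y); rewrite yT /= => /negP; apply.
by apply/existsP; exists k; apply/existsP; exists l; rewrite klD cr.
Qed.


Lemma Mk_JI k s : uniq s -> size s = k ->
  (forall x y, x \in s -> y \in s -> x != y -> mm x y = 1) -> @Mk K n x0 mm k s = JI K k.
Proof.
move=> us sz h; apply/matrixP => i j; rewrite !mxE.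
have hi : (i < size s)%N by rewrite sz.
have hj : (j < size s)%N by rewrite sz.
case: (eqVneq i j) => [->|ne]; first by rewrite /mm eqxx.
rewrite h ?mem_nth //.
by rewrite nth_uniq // val_eqE.
Qed.

Lemma leaf (S : {set 'I_n}) : (3 <= #|S|)%N -> uncrossed D S ->
  dS S = (-1) ^+ (#|S| - 1) * \prod_(T in cellsR S) (#|T| - 1)%:R /\
  (\sum_(T in cellsR S) (#|T| - 2) = #|S| - 2)%N /\ (forall T, T \in cellsR S -> 3 <= #|T|)%N.
Proof.
move=> h3 hu.
have cS : cellsR S = [set S].
  apply/setP => T; rewrite !inE; apply/maxsetP/eqP.
  - by case=> [/andP [hsub _] hmax]; symmetry; apply: hmax => //; rewrite /PS subxx hu.
  - move=> ->; split; first by rewrite /PS subxx hu.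
    by move=> B0 /andP [hB _] hSB; apply/eqP; rewrite eqEsubset hB hSB.
rewrite cS big_set1 big_set1; split; last split => //.
- rewrite /dS (@Mk_JI _ (enum S)) ?enum_uniq -?cardE //; last first.
    by move=> x y; rewrite !mem_enum; apply: mm_uncr.
  have [q hq] : exists q, #|S| = q.+1 by exists (#|S|.-1); rewrite prednK // (ltn_trans _ h3).
  by rewrite hq det_JI subn1.
- by move=> T; rewrite inE => /eqP ->.
Qed.


Lemma mem_AB (S : {set 'I_n}) (a b z : 'I_n) : a \in S -> b \in S -> a != b ->
 [/\ (z \in a :: b :: [seq w : 'I_n <- enum S | insd a b w]) = (z \in S) && ~~ outsd a b z,
     (z \in a :: b :: [seq w : 'I_n <- enum S | outsd a b w]) = (z \in S) && ~~ insd a b z &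
     (z \in a :: b :: [seq w : 'I_n <- enum S | insd a b w] ++ [seq w : 'I_n <- enum S | outsd a b w]) = (z \in S)].
Proof.
move=> aS bS ab.
have eS (p : pred nat) : (z \in [seq w : 'I_n <- enum S | p w]) = p z && (z \in S).
  by rewrite mem_filter mem_enum.
rewrite !in_cons !mem_cat !eS.
have [->|za] := eqVneq z a.
  by rewrite aS /=; split => //; apply/esym/negP; rewrite /insd /outsd; lia.
have [->|zb] := eqVneq z b.
  by rewrite orbT bS /=; split => //; apply/esym/negP; rewrite /insd /outsd; lia.
have za' : (z : nat) != a by rewrite val_eqE.
have zb' : (z : nat) != b by rewrite val_eqE.
rewrite /=.
have [iz|iz] := boolP (insd a b z); have [oz|oz] := boolP (outsd a b z);
  rewrite ?andbT ?andbF ?orbF ?orbT /=; split => //; try by rewrite andbC.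
all: by move: iz oz; rewrite /insd /outsd; lia.
Qed.


Lemma dperm (X : {set 'I_n}) s : uniq s -> (forall z, (z \in s) = (z \in X)) ->
  dS X = \det (Mk K n x0 mm (size s) s).
Proof.
move=> us ms; rewrite /dS.
have cX : #|X| = size s by rewrite -(eq_card ms); apply/card_uniqP.
rewrite cX; apply: det_Mk_perm => //; first exact: enum_uniq.
- by move=> z; rewrite mem_enum ms.
- by rewrite -cardE.
Qed.

Lemma big_disjU (R : Type) (idx : R) (op : Monoid.com_law idx) (X Y Z : {set {set 'I_n}}) F :
  Z = X :|: Y -> [disjoint X & Y] ->
  \big[op/idx]_(T in Z) F T = op (\big[op/idx]_(T in X) F T) (\big[op/idx]_(T in Y) F T).
Proof. by move=> -> dj; rewrite -bigU //; apply: eq_bigl => T; rewrite !inE. Qed.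

Lemma main k : forall S : {set 'I_n}, #|S| = k -> (3 <= k)%N -> closedS S ->
  dS S = (-1) ^+ (k - 1) * \prod_(T in cellsR S) (#|T| - 1)%:R /\
  (\sum_(T in cellsR S) (#|T| - 2) = k - 2)%N /\ (forall T, T \in cellsR S -> 3 <= #|T|)%N.
Proof.
elim/ltn_ind: k => k IH S hk h3 hcl.
have [hu|hu] := boolP (uncrossed D S).
  by rewrite -hk; apply: leaf; rewrite // hk.
move: hu => /forallPn [x]; rewrite negb_imply => /andP [xS /forallPn [y]].
rewrite negb_imply negbK => /andP [yS /existsP [a /existsP [b /andP [abD cr]]]].
have aS : a \in S by apply: (hcl x y a b).
have bS : b \in S.
  apply: (hcl x y b a) => //; first by rewrite setUC.
  by apply/crossE; apply: crossN_34; apply/crossE.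
move/crossE: cr => cr.
have ab : a != b by apply/eqP => e; apply: (crossN_neq cr); rewrite e.
pose A' := [seq w : 'I_n <- enum S | insd a b w].
pose B' := [seq w : 'I_n <- enum S | outsd a b w].
pose A := [set z in S | ~~ outsd a b z].
pose B := [set z in S | ~~ insd a b z].
have mA z : (z \in a :: b :: A') = (z \in A) by case: (mem_AB z aS bS ab) => -> _ _; rewrite /A inE.
have mB z : (z \in a :: b :: B') = (z \in B) by case: (mem_AB z aS bS ab) => _ -> _; rewrite /B inE.
have mS z : (z \in (a :: b :: A') ++ B') = (z \in S) by case: (mem_AB z aS bS ab).
have nA z : z \in A' -> insd a b z by rewrite mem_filter => /andP [].
have nB z : z \in B' -> outsd a b z by rewrite mem_filter => /andP [].
have naa := L_na a b.
have nbb := L_nb a b.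
have io z : insd a b z -> ~~ outsd a b z := @L_io a b z.
have uA' : uniq A' := filter_uniq _ (enum_uniq _).
have uB' : uniq B' := filter_uniq _ (enum_uniq _).
have aA' : a \notin A' by apply/negP => /nA; rewrite (negbTE naa.1).
have bA' : b \notin A' by apply/negP => /nA; rewrite (negbTE nbb.1).
have aB' : a \notin B' by apply/negP => /nB; rewrite (negbTE naa.2).
have bB' : b \notin B' by apply/negP => /nB; rewrite (negbTE nbb.2).
have uA : uniq (a :: b :: A') by rewrite /= in_cons negb_or ab aA' bA' uA'.
have uB : uniq (a :: b :: B') by rewrite /= in_cons negb_or ab aB' bB' uB'.
have uS : uniq ((a :: b :: A') ++ B').
  rewrite /= !in_cons !mem_cat !negb_or ab aA' bA' aB' bB' cat_uniq uA' uB' /= andbT.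
  apply/hasPn => z /nB oz; apply/negP => /nA iz; by move: (io z iz); rewrite oz.
have cA : #|A| = (size A').+2 by rewrite -(eq_card mA); apply/card_uniqP.
have cB : #|B| = (size B').+2 by rewrite -(eq_card mB); apply/card_uniqP.
have cS : #|S| = (size A').+2 + size B'.
  by rewrite -(eq_card mS); move/card_uniqP: (uS) => ->; rewrite size_cat.
have [z1 [z2 [z1S z2S i1 o2]]] : exists z1 z2, [/\ z1 \in S, z2 \in S, insd a b z1 & outsd a b z2].
  case: (L_split (crossN_sw cr)) => [[h1 h2]|[h1 h2]]; [exists x, y | exists y, x]; by split.
have z1A : z1 \in A' by rewrite mem_filter i1 mem_enum.
have z2B : z2 \in B' by rewrite mem_filter o2 mem_enum.
have pA : (0 < size A')%N by move: z1A; case: (A').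
have pB : (0 < size B')%N by move: z2B; case: (B').
have hA : A \subset S by apply/subsetP => w; rewrite inE => /andP [].
have hB : B \subset S by apply/subsetP => w; rewrite inE => /andP [].
have clA : closedS A.
  move=> u v k' l'; rewrite !inE => /andP [u_S ou] /andP [v_S ov] klD /crossE cuv.
  have -> /= : k' \in S by apply: (hcl u v k' l') => //; apply/crossE.
  exact: (L_clA ou ov cuv (noncrossD abD klD)).
have clB : closedS B.
  move=> u v k' l'; rewrite !inE => /andP [u_S ou] /andP [v_S ov] klD /crossE cuv.
  have -> /= : k' \in S by apply: (hcl u v k' l') => //; apply/crossE.
  exact: (L_clB ou ov cuv (noncrossD abD klD)).
have ltA : (#|A| < k)%N by rewrite cA -hk cS; apply: L_lt.
have ltB : (#|B| < k)%N by rewrite cB -hk cS; apply: L_lt'.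
have h3A : (3 <= #|A|)%N by rewrite cA; apply: L_3.
have h3B : (3 <= #|B|)%N by rewrite cB; apply: L_3.
have [dA [sA tA]] := IH #|A| ltA A erefl h3A clA.
have [dB [sB tB]] := IH #|B| ltB B erefl h3B clB.
have part (T : {set 'I_n}) : T \subset S -> uncrossed D T -> T \subset A \/ T \subset B.
  move=> TS uT.
  case: (boolP [exists z in T, insd a b z]) => [/existsP [z /andP [zT iz]] | /existsPn nz].
  - left; apply/subsetP => w wT; rewrite inE (subsetP TS _ wT) /=.
    apply/negP => ow; apply: (uncr_elim uT zT wT abD).
    exact: L_inout.
  - right; apply/subsetP => w wT; rewrite inE (subsetP TS _ wT) /=.
    by move: (nz w); rewrite wT.
have AB2 (T : {set 'I_n}) : T \subset A -> T \subset B -> (#|T| <= 2)%N.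
  move=> TA TB; apply: (leq_trans (subset_leq_card (_ : T \subset [set a; b]))).
    apply/subsetP => w wT; move: (subsetP TA _ wT) (subsetP TB _ wT).
    rewrite !inE => /andP [_ ow] /andP [_ iw].
    by case: (L_mid ow iw) => /val_inj ->; rewrite eqxx ?orbT.
  by rewrite cards2 ab.
have cU : cellsR S = cellsR A :|: cellsR B.
  apply/setP => T; rewrite !inE; apply/idP/orP.
  - move/maxsetP => [/andP [TS uT] hmax].
    case: (part T TS uT) => [TA|TB]; [left|right]; apply/maxsetP; split.
    + by rewrite /PS TA uT.
    + move=> B0 /andP [B0A uB0] TB0; apply: hmax => //.
      by rewrite /PS uB0 (subset_trans B0A hA).
    + by rewrite /PS TB uT.
    + move=> B0 /andP [B0B uB0] TB0; apply: hmax => //.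
      by rewrite /PS uB0 (subset_trans B0B hB).
  - case=> hT; have /maxsetP [/andP [TX uT] hmax] := hT; apply/maxsetP; split.
    + by rewrite /PS uT (subset_trans TX hA).
    + move=> T' /andP [T'S uT'] TT'; case: (part T' T'S uT') => [T'A|T'B].
        by apply: hmax => //; rewrite /PS T'A uT'.
      have := tA T; rewrite inE => /(_ hT).
      by move/L_32 => hh; exfalso; apply: hh; apply: AB2 T TX (subset_trans TT' T'B).
    + by rewrite /PS uT (subset_trans TX hB).
    + move=> T' /andP [T'S uT'] TT'; case: (part T' T'S uT') => [T'A|T'B]; last first.
        by apply: hmax => //; rewrite /PS T'B uT'.
      have := tB T; rewrite inE => /(_ hT).
      by move/L_32 => hh; exfalso; apply: hh; apply: AB2 T (subset_trans TT' T'A) TX.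
have dj : [disjoint cellsR A & cellsR B].
  rewrite disjoints_subset; apply/subsetP => T hTA; rewrite inE; apply/negP => hTB.
  have := tA T hTA.
  move: hTA hTB; rewrite !inE => /maxsetp /andP [TA _] /maxsetp /andP [TB _].
  by move/L_32 => hh; exfalso; apply: hh; apply: AB2 T TA TB.
have mab : mm a b = 1 by apply: (mm_uncr (uncr_D abD)); rewrite ?inE ?eqxx ?orbT.
have mba : mm b a = 1 by rewrite mmC.
have maa : mm a a = 0 by rewrite /mm eqxx.
have mbb : mm b b = 0 by rewrite /mm eqxx.
have fab : f [set a; b] = 1 by move: mab; rewrite /mm (negbTE ab).
have rel x' y' : x' \in A' -> y' \in B' -> mm x' y' = mm x' a * mm b y' + mm x' b * mm a y'.
  move=> /nA ix /nB oy.
  have cxy : cross x' y' a b.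
    by apply/crossE; apply: L_inout.
  move: (hW cxy); rewrite abD orbT => /(_ isT); rewrite fab mulr1 => h.
  have xa : x' != a by apply: contraTneq ix => ->; exact: naa.1.
  have xb : x' != b by apply: contraTneq ix => ->; exact: nbb.1.
  have ya : y' != a by apply: contraTneq oy => ->; exact: naa.2.
  have yb : y' != b by apply: contraTneq oy => ->; exact: nbb.2.
  have xy : x' != y' by apply: contraTneq oy => <-; exact: io.
  rewrite /mm (negbTE xy) (negbTE xa) (negbTE xb) eq_sym (negbTE yb) eq_sym (negbTE ya) h.
  by rewrite (setUC [set y']) (setUC [set y']).
have key1 := det_Mk_cat K n x0 mm a b A' B' maa mbb mab mba mmC rel.
have key2 := det_Mk_cat K n x0 mm a b [::] B' maa mbb mab mba mmC (fun x' y' => ltac:(by [])).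
have d2 : \det (Mk K n x0 mm 2 [:: a; b]) = -1.
  rewrite (@Mk_JI 2 [:: a; b]) //=; first by rewrite det_JI expr1 mulr1.
    by rewrite in_cons in_nil orbF ab.
  move=> u v; rewrite !in_cons !orbF => /orP [] /eqP -> /orP [] /eqP ->; rewrite ?eqxx //.
have eqS : dS S = - (dS A * dS B).
  rewrite (dperm uS mS) size_cat (dperm uA mA) (dperm uB mB) key1.
  have -> : \det (Mk K n x0 mm (size (a :: b :: B')) (a :: b :: B')) =
    \det (Mk K n x0 mm 2 [:: a; b]) *
    \det (Mk K n x0 mm (size B') B' - \matrix_(i < size B', j < size B')
          (mm a (nth x0 B' i) * mm b (nth x0 B' j) + mm b (nth x0 B' i) * mm a (nth x0 B' j))).
    exact: key2.
  rewrite d2; ring.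
split; last split.
- rewrite eqS dA dB (@big_disjU _ _ _ _ _ _ _ cU dj) cA cB -hk cS.
  rewrite L_e1 !L_e2.
  rewrite !exprS exprD /=; ring.
- by rewrite (@big_disjU _ _ _ _ _ _ _ cU dj) sA sB cA cB -hk cS /= L_e3.
- move=> T; rewrite cU inE => /orP [/tA|/tB] //.
Qed.

End Frieze.

Unset Implicit Arguments.

Theorem corollary4p1 (K : fieldType) (n : nat) (D : {set {set 'I_n}})
    (f : {set 'I_n} -> K) :
  (3 <= n)%N ->
  dissection D ->
  weak_frieze D f ->
  (forall S, S \in cells D -> forall i j : 'I_n, i \in S -> j \in S -> i != j ->
     f [set i; j] = 1) ->
  \det (frieze_matrix f) =
    (-1) ^+ (#|cells D| - 1) *
      \prod_(S in cells D) ((-1) ^+ (#|S| - 1) * (#|S| - 1)%:R)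
  /\
  \det (frieze_matrix f) =
    (-1) ^+ (n - 1) * \prod_(S in cells D) (#|S| - 1)%:R.
Proof.
move=> h3 hD hW hC.
have x0 : 'I_n := Ordinal (leq_trans (isT : (0 < 3)%N) h3).
have cT : #|[set: 'I_n]| = n by rewrite cardsT card_ord.
have clT : closedS D [set: 'I_n] by move=> *; rewrite inE.
have [dT [sT tT]] := main x0 hD hW hC cT h3 clT.
have eM : dS f x0 [set: 'I_n] = \det (frieze_matrix f).
  rewrite /dS cT; congr (\det _); apply/matrixP => i j; rewrite !mxE.
  have ni (u : 'I_n) : nth x0 (enum [set: 'I_n]) u = u.
    by apply: ord_inj; rewrite enum_setT -enumT nth_enum_ord.
  by rewrite !ni /mm.
have eC : cellsR D [set: 'I_n] = cells D.
  apply/setP => T; rewrite !inE; apply: maxset_eq => T'.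
  by rewrite /PS subsetT.
rewrite eC eM in dT sT tT.
split => //.
rewrite dT big_split /= prodrXr.
have s1 : (\sum_(T in cells D) (#|T| - 1) = \sum_(T in cells D) (#|T| - 2) + #|cells D|)%N.
  rewrite -sum1_card -big_split /=; apply: eq_bigr => T hT.
  exact: L_e4 (tT T hT).
have l1 : (0 < #|cells D|)%N.
  rewrite lt0n; apply/negP => /eqP /cards0_eq e.
  by move: sT; rewrite e big_set0 => /L_e6; apply.
rewrite s1 sT mulrA -exprD L_e5 // exprD exprM sqrrN expr1n expr1n mulr1.
by [].
Qed.
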